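(* Let $D$ be a connected locally semicomplete digraph in which no inclusion-wise maximal weak hub is mixed, and let $X,Y$ be two distinct inclusion-wise maximal weak hubs. Then exactly one of the following holds: there is no arc between $X$ and $Y$; or for all $x\in X,y\in Y$, $xy$ is an arc and $yx$ is not; or for all $x\in X,y\in Y$, $yx$ is an arc and $xy$ is not.
   Context: Digraphs are finite, no loops, no parallel arcs; digons allowed. $x^+$, $x^-$ are out- and in-neighbourhoods. Semicomplete: any two distinct vertices are joined by at least one arc; locally semicomplete: every $x^+$ and every $x^-$ induces a semicomplete digraph. A weak hub is a set $X\subseteq V(D)$ with $D[X]$ strongly connected such that some vertex $x$ satisfies $X\subseteq x^-\setminus x^+$ or $X\subseteq x^+\setminus x^-$. A weak hub $X$ is mixed if there exist $x\notin X$ and $u,v\in X$ such that $xu$ and $vx$ are arcs. *)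

(* Defs.v *)
From mathcomp Require Import all_boot.
Set Implicit Arguments. Unset Strict Implicit. Unset Printing Implicit Defensive.

(* no loops (parallel arcs are impossible with a relation; digons allowed) *)
Definition loopless (V : finType) (arc : rel V) : Prop := forall v, ~~ arc v v.

Definition outN (V : finType) (arc : rel V) (x : V) : {set V} := [set y | arc x y].
Definition inN (V : finType) (arc : rel V) (x : V) : {set V} := [set y | arc y x].

Definition semicomplete_on (V : finType) (arc : rel V) (S : {set V}) : Prop :=
  forall u v, u \in S -> v \in S -> u != v -> arc u v || arc v u.

Definition locally_semicomplete (V : finType) (arc : rel V) : Prop :=
  forall x, semicomplete_on arc (outN arc x) /\ semicomplete_on arc (inN arc x).

(* connected = weakly connected: the underlying undirected graph is connected *)
Definition dconnected (V : finType) (arc : rel V) : Prop :=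
  forall u v, connect [rel a b | arc a b || arc b a] u v.

Definition strong_on (V : finType) (arc : rel V) (X : {set V}) : Prop :=
  X != set0 /\
  forall u v, u \in X -> v \in X ->
    connect [rel a b | [&& a \in X, b \in X & arc a b]] u v.

Definition weak_hub (V : finType) (arc : rel V) (X : {set V}) : Prop :=
  strong_on arc X /\
  exists x, X \subset inN arc x :\: outN arc x \/ X \subset outN arc x :\: inN arc x.

Definition max_weak_hub (V : finType) (arc : rel V) (X : {set V}) : Prop :=
  weak_hub arc X /\ forall Z, weak_hub arc Z -> X \subset Z -> Z = X.

Definition mixed (V : finType) (arc : rel V) (X : {set V}) : Prop :=
  exists x u v, [/\ x \notin X, u \in X, v \in X, arc x u & arc v x].

Definition exactly_one3 (A B C : Prop) : Prop :=
  [/\ A, ~ B & ~ C] \/ [/\ ~ A, B & ~ C] \/ [/\ ~ A, ~ B & C].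

(* Main.v *)
Require Import Defs.
From mathcomp Require Import all_boot.
Set Implicit Arguments. Unset Strict Implicit. Unset Printing Implicit Defensive.

Lemma exit_lem (T : finType) (R : rel T) (P : pred T) x y :
  connect R x y -> P x -> ~~ P y -> exists u w, [/\ P u, ~~ P w & R u w].
Proof.
move/connectP=> [p]; elim: p x => [|z p IH] x /=; first by move=> _ -> ->.
move=> /andP[Rxz pz] ey Px; case Pz: (P z).
- exact: IH pz ey Pz.
- by exists x, z; rewrite Pz.
Qed.

Definition nonmixed (V : finType) (arc : rel V) (Y : {set V}) :=
  forall c u w, c \notin Y -> u \in Y -> w \in Y -> arc c u -> arc w c -> False.

Lemma nm_of (V : finType) (arc : rel V) (Y : {set V}) :
  ~ mixed arc Y -> nonmixed arc Y.
Proof. by move=> h c u w cY uY wY cu wc; apply: h; exists c, u, w. Qed.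

Lemma L1 (V : finType) (arc : rel V) (Y : {set V}) a v :
  locally_semicomplete arc -> strong_on arc Y -> nonmixed arc Y ->
  a \notin Y -> v \in Y -> arc v a -> forall y, y \in Y -> arc y a && ~~ arc a y.
Proof.
move=> lsc [_ sY] nmY aY vY va y yY.
have na : forall z, z \in Y -> ~~ arc a z.
  by move=> z zY; apply/negP=> az; exact: (nmY a z v aY zY vY az va).
rewrite na // andbT.
move: (sY v y vY yY) => /connectP[p].
elim: p v vY va => [|z p IH] w wY wa /=; first by move=> _ ->.
move=> /andP[/and3P[_ zY wz] pz] ey.
apply: (IH z zY _ pz ey).
have az : a != z by apply/eqP=> e; move: aY; rewrite e zY.
have := (lsc w).1 a z; rewrite !inE => /(_ wa wz az) /orP[h|//].
by move: (na z zY); rewrite h.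
Qed.

Lemma L2 (V : finType) (arc : rel V) (Y : {set V}) a v :
  locally_semicomplete arc -> strong_on arc Y -> nonmixed arc Y ->
  a \notin Y -> v \in Y -> arc a v -> forall y, y \in Y -> arc a y && ~~ arc y a.
Proof.
move=> lsc [_ sY] nmY aY vY av y yY.
have na : forall z, z \in Y -> ~~ arc z a.
  by move=> z zY; apply/negP=> za; exact: (nmY a v z aY vY zY av za).
rewrite na // andbT.
move: (sY y v yY vY) => /connectP[p].
elim: p y yY => [|z p IH] w wY /=; first by move=> _ <-.
move=> /andP[/and3P[_ zY wz] pz] ey.
have az := IH z zY pz ey.
have aw : a != w by apply/eqP=> e; move: aY; rewrite e wY.
have := (lsc z).2 a w; rewrite !inE => /(_ az wz aw) /orP[//|h].
by move: (na w wY); rewrite h.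
Qed.

Lemma union_hub (V : finType) (arc : rel V) (X Y : {set V}) v a :
  strong_on arc X -> strong_on arc Y -> v \in X -> v \in Y ->
  (X :|: Y \subset inN arc a :\: outN arc a \/ X :|: Y \subset outN arc a :\: inN arc a) ->
  weak_hub arc (X :|: Y).
Proof.
move=> [_ sX] [_ sY] vX vY ha; split; last by exists a.
split.
  by apply/set0Pn; exists v; rewrite inE vX.
have cX : forall u w, u \in X -> w \in X ->
   connect [rel a b | [&& a \in X :|: Y, b \in X :|: Y & arc a b]] u w.
  move=> u w uX wX; apply: connect_sub (sX u w uX wX) => x y /= /and3P[xX yX xy].
  by apply: connect1; rewrite /= !inE xX yX xy.
have cY : forall u w, u \in Y -> w \in Y ->
   connect [rel a b | [&& a \in X :|: Y, b \in X :|: Y & arc a b]] u w.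
  move=> u w uX wX; apply: connect_sub (sY u w uX wX) => x y /= /and3P[xX yX xy].
  by apply: connect1; rewrite /= !inE xX yX xy !orbT.
move=> u w; rewrite !inE => /orP[uX|uY] /orP[wX|wY].
- exact: cX.
- exact: connect_trans (cX _ _ uX vX) (cY _ _ vY wY).
- exact: connect_trans (cY _ _ uY vY) (cX _ _ vX wX).
- exact: cY.
Qed.

Theorem claim4p6 (V : finType) (arc : rel V) (X Y : {set V}) :
  loopless arc ->
  dconnected arc ->
  locally_semicomplete arc ->
  (forall Z : {set V}, max_weak_hub arc Z -> ~ mixed arc Z) ->
  max_weak_hub arc X -> max_weak_hub arc Y -> X != Y ->
  exactly_one3
    (forall x y, x \in X -> y \in Y -> ~~ arc x y && ~~ arc y x)
    (forall x y, x \in X -> y \in Y -> arc x y && ~~ arc y x)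
    (forall x y, x \in X -> y \in Y -> arc y x && ~~ arc x y).
Proof.
move=> lf _ lsc nm mX mY XY.
have nmX := nm_of (nm X mX); have nmY := nm_of (nm Y mY).
case: mX => hX maxX; case: mY => hY maxY.
have sX := hX.1; have sY := hY.1.
have disj : forall v, v \in X -> v \in Y -> False.
  move=> v vX vY.
  have nXY : ~~ (X \subset Y).
    apply/negP=> sub; move: XY; by rewrite (maxX Y hY sub) eqxx.
  have nYX : ~~ (Y \subset X).
    apply/negP=> sub; move: XY; by rewrite (maxY X hX sub) eqxx.
  have [x1 x1X x1Y] : exists2 x1, x1 \in X & x1 \notin Y.
    by case/subsetPn: nXY => x1 h1 h2; exists x1.
  case: hX => _ [a ha].
  have aX : a \notin X.
    apply/negP=> aX; case: ha => /subsetP/(_ a aX); rewrite !inE; by rewrite (negbTE (lf a)) ?andbF.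
  case aY: (a \in Y).
  - case: ha => /subsetP hs.
    + have [u [w [uY wY Ruw]]] := exit_lem (P := fun z => z \in Y) (sX.2 v x1 vX x1X) vY x1Y.
      case/and3P: Ruw => _ wX uw.
      have := hs w wX; rewrite !inE => /andP[_ wa].
      exact: (nmY w a u wY aY uY wa uw).
    + have [u [w [uY wY Ruw]]] := exit_lem (P := fun z => z \notin Y) (sX.2 x1 v x1X vX) x1Y (introT negPn vY).
      move: wY; rewrite negbK => wY.
      case/and3P: Ruw => uX _ uw.
      have := hs u uX; rewrite !inE => /andP[_ au].
      exact: (nmY u w a uY wY aY uw au).
  - have aY' : a \notin Y by rewrite aY.
    have hu : weak_hub arc (X :|: Y).
      apply: (union_hub (a:=a) sX sY vX vY).
      case: ha => /subsetP hs; [left|right]; apply/subsetP=> z; rewrite inE => /orP[zX|zY].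
      + exact: hs.
      + have := hs v vX; rewrite !inE => /andP[_ va].
        by have := L1 lsc sY nmY aY' vY va zY; rewrite andbC.
      + exact: hs.
      + have := hs v vX; rewrite !inE => /andP[_ av].
        by have := L2 lsc sY nmY aY' vY av zY; rewrite andbC.
    have e := maxX _ hu (subsetUl X Y).
    have : Y \subset X by rewrite -e subsetUr.
    by rewrite (negbTE nYX).
have [x0 x0X] : exists x0, x0 \in X by case/set0Pn: sX.1 => x0; exists x0.
have [y0 y0Y] : exists y0, y0 \in Y by case/set0Pn: sY.1 => y0; exists y0.
have notX : forall y, y \in Y -> y \notin X by move=> y yY; apply/negP=> yX; exact: disj y yX yY.
have notY : forall x, x \in X -> x \notin Y by move=> x xX; apply/negP=> xY; exact: disj x xX xY.
case: (boolP [exists x, exists y, [&& x \in X, y \in Y & arc x y]]).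
  case/existsP=> x1 /existsP[y1 /and3P[x1X y1Y xy]].
  have B : forall x y, x \in X -> y \in Y -> arc x y && ~~ arc y x.
    move=> x y xX yY.
    have /andP[xy1 _] := L1 lsc sX nmX (notX _ y1Y) x1X xy xX.
    exact: (L2 lsc sY nmY (notY _ xX) y1Y xy1 yY).
  right; left; split => //.
  - by move=> h; have := h x0 y0 x0X y0Y; have := B x0 y0 x0X y0Y; case: (arc x0 y0); case: (arc x0 y0); case: (arc y0 x0).
  - by move=> h; have := h x0 y0 x0X y0Y; have := B x0 y0 x0X y0Y; case: (arc x0 y0); case: (arc x0 y0); case: (arc y0 x0).
move=> nB.
case: (boolP [exists x, exists y, [&& x \in X, y \in Y & arc y x]]).
  case/existsP=> x1 /existsP[y1 /and3P[x1X y1Y yx]].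
  have C : forall x y, x \in X -> y \in Y -> arc y x && ~~ arc x y.
    move=> x y xX yY.
    have /andP[yx1 _] := L2 lsc sX nmX (notX _ y1Y) x1X yx xX.
    exact: (L1 lsc sY nmY (notY _ xX) y1Y yx1 yY).
  right; right; split => //.
  - by move=> h; have := h x0 y0 x0X y0Y; have := C x0 y0 x0X y0Y; case: (arc x0 y0); case: (arc y0 x0).
  - by move=> h; have := h x0 y0 x0X y0Y; have := C x0 y0 x0X y0Y; case: (arc x0 y0); case: (arc x0 y0); case: (arc y0 x0).
move=> nC.
have A : forall x y, x \in X -> y \in Y -> ~~ arc x y && ~~ arc y x.
  move=> x y xX yY; apply/andP; split; apply/negP=> h.
  - by move/negP: nB; apply; apply/existsP; exists x; apply/existsP; exists y; rewrite xX yY h.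
  - by move/negP: nC; apply; apply/existsP; exists x; apply/existsP; exists y; rewrite xX yY h.
left; split => //.
- by move=> h; have := h x0 y0 x0X y0Y; have := A x0 y0 x0X y0Y; case: (arc x0 y0); case: (arc x0 y0); case: (arc y0 x0).
- by move=> h; have := h x0 y0 x0X y0Y; have := A x0 y0 x0X y0Y; case: (arc x0 y0); case: (arc y0 x0).
Qed.
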